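(* Let $G=(V,E)$ be a simple connected undirected graph with $n\ge 2$ vertices, let $S$ be the output of Algorithm Stage-One on $G$, and let $S'=S\setminus V(G(P_S))$. Then $S'$ has a system of distinct representatives in $N(S')\setminus S$; that is, there is an injective map $\varphi:S'\to N(S')\setminus S$ such that $(x,\varphi(x))\in E$ for every $x\in S'$.
   Context: For $v\in V$, $N(v)=\{u\in V:(u,v)\in E\}$; for $U\subseteq V$, $N(U)=\{v\in V\setminus U: v \text{ has a neighbor in } U\}$. Algorithm Stage-One: set $S_0=\emptyset$ and $h=0$. While $S_h$ is not a dominating set of $G$: increase $h$ by one; for each $v\in V\setminus S_{h-1}$ its active degree is $|N(v)\setminus (S_{h-1}\cup N(S_{h-1}))|$; if the maximum active degree over $V\setminus S_{h-1}$ is positive, let $v_h$ be any vertex of $V\setminus S_{h-1}$ of maximum active degree, otherwise let $v_h$ be any vertex of $V\setminus(S_{h-1}\cup N(S_{h-1}))$; set $S_h=S_{h-1}\cup\{v_h\}$. The output is $S=S_p=\{v_1,\dots,v_p\}$. For $h\in\{1,\dots,p\}$, let $S(h)=N(v_h)\setminus(S_{h-1}\cup N(S_{h-1}))$. The set of tied pairs is $P_S=\{(v_h,v): h\in\{1,\dots,p\},\ v\in S\cap S(h)\}$. $G(P_S)$ is the subgraph of $G$ whose edges are the tied pairs and whose vertices are the endpoints of tied pairs; $V(G(P_S))$ is its vertex set. *)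

(* Defs.v *)
From mathcomp Require Import all_boot.
Set Implicit Arguments. Unset Strict Implicit. Unset Printing Implicit Defensive.

Section StageOne.
Variables (T : finType) (e : rel T).

Definition nbr (v : T) : {set T} := [set u | e u v].

Definition nbrS (U : {set T}) : {set T} :=
  [set v | (v \notin U) && [exists u in U, e u v]].

Definition dominating (D : {set T}) : bool := [set: T] \subset D :|: nbrS D.

Definition active_nbrs (D : {set T}) (v : T) : {set T} := nbr v :\: (D :|: nbrS D).
Definition active_deg (D : {set T}) (v : T) : nat := #|active_nbrs D v|.

Definition stage_one_step (D : {set T}) (v : T) : Prop :=
  ~~ dominating D /\ v \notin D /\
  ((exists u, u \notin D /\ 0 < active_deg D u) ->
      forall u, u \notin D -> active_deg D u <= active_deg D v) /\
  (~ (exists u, u \notin D /\ 0 < active_deg D u) -> v \notin D :|: nbrS D).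

(* s = [:: v_1; ...; v_p] is a possible run (with any admissible choices) of
   Stage-One: every v_h is an admissible choice given S_{h-1} = {v_1..v_{h-1}},
   and the loop stops exactly when S_p is dominating. *)
Definition stage_one_run (s : seq T) : Prop :=
  (forall s1 v s2, s = s1 ++ v :: s2 -> stage_one_step [set x in s1] v) /\
  dominating [set x in s].

Definition tied (s : seq T) (a b : T) : Prop :=
  exists s1 s2, s = s1 ++ a :: s2 /\ b \in s /\ b \in active_nbrs [set x in s1] a.

Definition in_tied_graph (s : seq T) (x : T) : Prop :=
  exists y, tied s x y \/ tied s y x.

Definition S' (s : seq T) (x : T) : Prop := x \in s /\ ~ in_tied_graph s x.

Definition nbrS' (s : seq T) (v : T) : Prop :=
  ~ S' s v /\ exists u, S' s u /\ e u v.

End StageOne.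

(* Main.v *)
Require Import Defs.
From mathcomp Require Import all_boot.

Section Aux.
Variables (T : finType) (e : rel T).
Hypothesis e_sym : symmetric e.

Lemma exists_pos (D : {set T}) :
  (forall w, exists y, e w y) ->
  ~~ dominating e D -> exists u, u \notin D /\ 0 < active_deg e D u.
Proof.
move=> hn; rewrite /dominating => /subsetPn [w _ hw].
have [y hy] := hn w.
case hyD: (y \in D :|: nbrS e D).
- move: hyD; rewrite in_setU; case/orP => hyD.
  + exfalso; move: hw; rewrite in_setU negb_or => /andP [hwD /negP]; apply.
    rewrite inE hwD /=; apply/existsP; exists y; rewrite hyD /=.
    by rewrite e_sym.
  + exists y; split.
    * by move: hyD; rewrite inE => /andP [].
    * rewrite /active_deg card_gt0; apply/set0Pn; exists w.
      by rewrite /active_nbrs in_setD hw inE hy.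
- exists w; split.
  + by move: hw; rewrite in_setU negb_or => /andP [].
  + rewrite /active_deg card_gt0; apply/set0Pn; exists y.
    by rewrite /active_nbrs in_setD hyD inE e_sym.
Qed.

End Aux.

Theorem claim1 (T : finType) (e : rel T)
  (e_sym : symmetric e) (e_irr : irreflexive e)
  (e_conn : forall x y : T, connect e x y)
  (n_ge2 : 1 < #|T|)
  (s : seq T) (run : stage_one_run e s) :
  exists phi : T -> T,
    (forall x y, S' e s x -> S' e s y -> phi x = phi y -> x = y) /\
    (forall x, S' e s x ->
       (nbrS' e s (phi x) /\ phi x \notin s) /\ e x (phi x)).
Proof.
have hn : forall w, exists y, e w y.
  move=> w; have [a [b [_ _ hab]]] := card_gt1P n_ge2.
  have [z hz] : exists z, z != w.
    case: (eqVneq a w) => h; last by exists a.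
    by exists b; rewrite -h eq_sym.
  have /connectP [p hp hl] := e_conn w z.
  case: p hp hl => [|y p] /=; first by move=> _ hzw; rewrite hzw eqxx in hz.
  by case/andP => hy _ _; exists y.
set Dof := fun x => [set y in take (index x s) s].
have decomp : forall x, x \in s -> s = take (index x s) s ++ x :: drop (index x s).+1 s.
  move=> x hx.
  by rewrite -{1}(cat_take_drop (index x s) s) (drop_nth x) ?index_mem ?nth_index.
have hne : forall x, x \in s -> exists u, u \in active_nbrs e (Dof x) x.
  move=> x hx.
  have [hnd [hxD [H1 _]]] := run.1 _ _ _ (decomp x hx).
  have [u [huD hu]] := @exists_pos T e e_sym _ hn hnd.
  have := leq_trans hu (H1 (ex_intro _ u (conj huD hu)) u huD).
  by rewrite /active_deg card_gt0 => /set0Pn.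
pose phi x := odflt x [pick u in active_nbrs e (Dof x) x].
have hphi : forall x, x \in s -> phi x \in active_nbrs e (Dof x) x.
  move=> x hx; rewrite /phi; case: pickP => [u hu|h] //=.
  by have [u hu] := hne x hx; rewrite h in hu.
have hlt : forall x y, x \in s -> y \in s -> index x s < index y s -> phi x != phi y.
  move=> x y hx hy hxy; apply/eqP => heq.
  have := hphi y hy; rewrite -heq /active_nbrs in_setD in_setU negb_or.
  case/andP => /andP [hD hN] _.
  have hxD : x \in Dof y.
    rewrite inE; have -> : x = nth x (take (index y s) s) (index x s).
      by rewrite nth_take // nth_index.
    by apply: mem_nth; rewrite size_take; case: ifP => // _; rewrite index_mem.
  have := hphi x hx; rewrite /active_nbrs in_setD inE => /andP [_ hex].
  move/negP: hN; apply; rewrite inE hD /=; apply/existsP; exists x.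
  rewrite hxD /=; move: hex; rewrite /nbr inE. by rewrite [e (phi x) x]e_sym.
exists phi; split.
- move=> x y [hx _] [hy _] heq.
  case: (ltngtP (index x s) (index y s)) => h.
  + by move: (hlt _ _ hx hy h); rewrite heq eqxx.
  + by move: (hlt _ _ hy hx h); rewrite heq eqxx.
  + by rewrite -(nth_index x hx) h (set_nth_default x) ?nth_index // -h index_mem.
- move=> x [hx hnt].
  have hp := hphi x hx.
  have hex : e x (phi x).
    by move: hp; rewrite /active_nbrs /nbr in_setD inE e_sym => /andP [].
  have hns : phi x \notin s.
    apply/negP => hin; apply: hnt; exists (phi x); left.
    exists (take (index x s) s), (drop (index x s).+1 s); split => //.
    exact: decomp.
  split => //; split => //; split.
  + by move=> [h _]; rewrite h in hns.
  + by exists x.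
Qed.
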